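(* Consider a neutral evolutionary model on $N$ sites given by a replacement rule $p$ satisfying the fixation assumption described in the context. For any set $S\subseteq\{1,\ldots,N\}$ of sites, $\rho_S=\sum_{i\in S}\rho_i$. In particular, $\sum_{i=1}^N\rho_i=1$.
   Context: There are $N$ sites $1,\ldots,N$, each always occupied by one individual of type M (mutant) or R (resident); a state is $\mathbf{s}\in\{\mathrm{M},\mathrm{R}\}^N$. A replacement event is a pair $(R,\alpha)$ with $R\subseteq\{1,\ldots,N\}$ and $\alpha:R\to\{1,\ldots,N\}$. A replacement rule is a probability distribution $p(R,\alpha)$ on replacement events, independent of the state. The evolutionary Markov chain: at each time-step an event $(R,\alpha)$ is drawn with probability $p(R,\alpha)$ and the new state is $s_i'=s_i$ if $i\notin R$, $s_i'=s_{\alpha(i)}$ if $i\in R$. Fixation assumption: there exist a site $i$ and a finite sequence of replacement events, each of positive probability, such that if these events occur consecutively (from any initial state) every site ends up carrying the type initially at site $i$. For $S\subseteq\{1,\ldots,N\}$, $\rho_S=\lim_{t\to\infty}\Pr[\mathbf{s}(t)=(\mathrm{M},\ldots,\mathrm{M})]$ for the chain started from the state with M at the sites in $S$ and R at all other sites; $\rho_i=\rho_{\{i\}}$. *)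

(* Defs.v *)
From HB Require Import structures.
From mathcomp Require Import all_boot all_order all_algebra.
From mathcomp Require Import all_classical all_reals all_analysis.
Set Implicit Arguments. Unset Strict Implicit. Unset Printing Implicit Defensive.
Import Order.TTheory GRing.Theory Num.Theory.
Local Open Scope ring_scope.

(* Sites are 'I_N (site k+1 of the paper is ordinal k).
   A state assigns a type to each site: true = M (mutant), false = R (resident). *)
Definition state (N : nat) := {ffun 'I_N -> bool}.

(* A replacement event (R, alpha): R is a set of sites and alpha gives, for each
   i in R, the parent site alpha i.  alpha is stored as a total function on sites;
   its values outside R are irrelevant (never used). *)
Definition event (N : nat) := ({set 'I_N} * {ffun 'I_N -> 'I_N})%type.

Definition apply_event (N : nat) (e : event N) (s : state N) : state N :=
  [ffun i => if i \in e.1 then s (e.2 i) else s i].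

Definition replacement_rule (R : realType) (N : nat) (p : event N -> R) : Prop :=
  (forall e, 0 <= p e) /\ \sum_(e : event N) p e = 1.

Definition fixation_assumption (R : realType) (N : nat) (p : event N -> R) : Prop :=
  exists i : 'I_N, exists es : seq (event N),
    all (fun e => 0 < p e) es /\
    forall s : state N, foldl (fun s e => apply_event e s) s es = [ffun _ => s i].

Fixpoint distr (R : realType) (N : nat) (p : event N -> R) (s0 : state N) (t : nat)
  : state N -> R :=
  match t with
  | 0 => fun s => (s == s0)%:R
  | t'.+1 => fun s' =>
      \sum_(s : state N) distr p s0 t' s * \sum_(e : event N | apply_event e s == s') p e
  end.

Definition init_state (N : nat) (S : {set 'I_N}) : state N := [ffun i => i \in S].
Definition allM (N : nat) : state N := [ffun _ => true].

Definition fixprob_seq (R : realType) (N : nat) (p : event N -> R) (S : {set 'I_N})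
  : nat -> R := fun t => distr p (init_state S) t (allM N).

(* Main.v *)
Require Import Defs.
From HB Require Import structures.
From mathcomp Require Import all_boot all_order all_algebra.
From mathcomp Require Import all_classical all_reals all_analysis.
Set Implicit Arguments. Unset Strict Implicit. Unset Printing Implicit Defensive.
Import Order.TTheory GRing.Theory Num.Theory.
Import numFieldNormedType.Exports.
Local Open Scope ring_scope.

Definition Pop (R : realType) (E T : finType) (p : E -> R) (f : E -> T -> T)
  (h : T -> R) : T -> R := fun x => \sum_(e : E) p e * h (f e x).

Definition Q (R : realType) (E T : finType) (p : E -> R) (f : E -> T -> T) t
  (h : T -> R) : T -> R := iter t (Pop p f) h.

Fixpoint K (R : realType) (E T : finType) (p : E -> R) (f : E -> T -> T) t
  (x y : T) : R :=
  match t with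
  | 0 => (x == y)%:R
  | t'.+1 => \sum_(e : E) p e * K p f t' (f e x) y
  end.

Lemma sum_ind (R : realType) (T : finType) (a : T) (F : T -> R) :
  \sum_(x : T) (a == x)%:R * F x = F a.
Proof.
rewrite (bigD1 a) //= eqxx mul1r big1 ?addr0 // => x xa.
by rewrite eq_sym (negbTE xa) mul0r.
Qed.

Lemma Qrep (R : realType) (E T : finType) (p : E -> R) (f : E -> T -> T) t h x :
  Q p f t h x = \sum_y K p f t x y * h y.
Proof.
elim: t x => [|t IH] x; first by rewrite /Q /= sum_ind.
rewrite /Q iterS -/(Q p f t h) /Pop /=.
under eq_bigr do rewrite IH mulr_sumr.
rewrite exchange_big /=; apply: eq_bigr => y _.
by rewrite mulr_suml; apply: eq_bigr => e _; rewrite mulrA.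
Qed.

Lemma K_ge0 (R : realType) (E T : finType) (p : E -> R) (f : E -> T -> T) :
  (forall e, 0 <= p e) -> forall t x y, 0 <= K p f t x y.
Proof.
move=> p0; elim=> [|t IH] x y /=; first by rewrite ler0n.
by apply: sumr_ge0 => e _; rewrite mulr_ge0.
Qed.

Lemma Q_const (R : realType) (E T : finType) (p : E -> R) (f : E -> T -> T) :
  \sum_e p e = 1 -> forall t (c : R) x, Q p f t (fun _ => c) x = c.
Proof.
move=> p1; elim=> [|t IH] c x //.
rewrite /Q iterS -/(Q p f t _) /Pop.
under eq_bigr do rewrite IH.
by rewrite -mulr_suml p1 mul1r.
Qed.

Lemma K_sum1 (R : realType) (E T : finType) (p : E -> R) (f : E -> T -> T) :
  \sum_e p e = 1 -> forall t x, \sum_y K p f t x y = 1.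
Proof.
move=> p1 t x; rewrite -(Q_const f p1 t 1 x) Qrep.
by apply: eq_bigr => y _; rewrite mulr1.
Qed.

Lemma Q_le (R : realType) (E T : finType) (p : E -> R) (f : E -> T -> T) :
  (forall e, 0 <= p e) -> forall t h1 h2 x, (forall y, h1 y <= h2 y) ->
  Q p f t h1 x <= Q p f t h2 x.
Proof.
move=> p0 t h1 h2 x H; rewrite !Qrep; apply: ler_sum => y _.
by apply: ler_wpM2l; [apply: K_ge0|apply: H].
Qed.

Lemma Q_ge0 (R : realType) (E T : finType) (p : E -> R) (f : E -> T -> T) :
  (forall e, 0 <= p e) -> forall t h x, (forall y, 0 <= h y) ->
  0 <= Q p f t h x.
Proof.
move=> p0 t h x H; rewrite Qrep; apply: sumr_ge0 => y _.
by apply: mulr_ge0; [apply: K_ge0|apply: H].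
Qed.

Lemma Q_lin (R : realType) (E T : finType) (p : E -> R) (f : E -> T -> T) t
  (a : R) h1 h2 x :
  Q p f t (fun y => a * h1 y + h2 y) x = a * Q p f t h1 x + Q p f t h2 x.
Proof.
rewrite !Qrep mulr_sumr -big_split /=; apply: eq_bigr => y _.
by rewrite mulrDr mulrCA.
Qed.

Lemma Q_sum (R : realType) (E T I : finType) (p : E -> R) (f : E -> T -> T) t
  (P : pred I) (F : I -> T -> R) x :
  Q p f t (fun y => \sum_(i | P i) F i y) x = \sum_(i | P i) Q p f t (F i) x.
Proof.
rewrite Qrep.
under eq_bigr do rewrite mulr_sumr.
rewrite exchange_big /=; apply: eq_bigr => i _.
by rewrite Qrep.
Qed.

Lemma Q_norm (R : realType) (E T : finType) (p : E -> R) (f : E -> T -> T) :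
  (forall e, 0 <= p e) -> forall t h x,
  `|Q p f t h x| <= Q p f t (fun y => `|h y|) x.
Proof.
move=> p0 t h x; rewrite !Qrep; apply: (le_trans (ler_norm_sum _ _ _)).
apply: ler_sum => y _; rewrite normrM ger0_norm //; exact: K_ge0.
Qed.

Lemma QS (R : realType) (E T : finType) (p : E -> R) (f : E -> T -> T) t h x :
  Q p f t.+1 h x = Q p f t (Pop p f h) x.
Proof. by rewrite /Q iterSr. Qed.

Lemma QD (R : realType) (E T : finType) (p : E -> R) (f : E -> T -> T) a b h x :
  Q p f (a + b) h x = Q p f a (Q p f b h) x.
Proof. by rewrite /Q iterD. Qed.

Lemma Q_fold (R : realType) (E T : finType) (p : E -> R) (f : E -> T -> T) :
  (forall e, 0 <= p e) -> forall h, (forall y, 0 <= h y) ->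
  forall (es : seq E) x,
  (\prod_(e <- es) p e) * h (foldl (fun s e => f e s) x es) <= Q p f (size es) h x.
Proof.
move=> p0 h h0; elim=> [|e es IH] x; first by rewrite big_nil mul1r.
rewrite big_cons /= /Pop.
rewrite (bigD1 e) //= -mulrA.
apply: (@le_trans _ _ (p e * Q p f (size es) h (f e x))).
  by apply: ler_wpM2l; [exact: p0|exact: IH].
rewrite lerDl.
by apply: sumr_ge0 => e' _; apply: mulr_ge0 => //; apply: Q_ge0.
Qed.

Definition gen (N : nat) (X : Type) (e : event N) (f : {ffun 'I_N -> X}) :
  {ffun 'I_N -> X} := [ffun i => if i \in e.1 then f (e.2 i) else f i].

Definition compf (N : nat) (X : Type) (s : {ffun 'I_N -> X})
  (A : {ffun 'I_N -> 'I_N}) : {ffun 'I_N -> X} := [ffun j => s (A j)].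

Definition idm (N : nat) : {ffun 'I_N -> 'I_N} := [ffun j => j].

Lemma gen_comp N (X : Type) e (s : {ffun 'I_N -> X}) A :
  gen e (compf s A) = compf s (gen e A).
Proof. by apply/ffunP => i; rewrite !ffunE; case: ifP; rewrite ?ffunE. Qed.

Lemma compf_id N (X : Type) (s : {ffun 'I_N -> X}) : compf s (idm N) = s.
Proof. by apply/ffunP => i; rewrite !ffunE. Qed.

Lemma foldl_comp N (X : Type) (es : seq (event N)) (s : {ffun 'I_N -> X}) A :
  foldl (fun s e => gen e s) (compf s A) es =
  compf s (foldl (fun s e => gen e s) A es).
Proof. by elim: es A => [|e es IH] A //=; rewrite gen_comp IH. Qed.

Lemma distr_op (R : realType) N (p : event N -> R) t (h : state N -> R) s0 :
  \sum_s distr p s0 t s * h s = Q p (@apply_event N) t h s0.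
Proof.
elim: t h => [|t IH] h.
  rewrite /Q /=; under eq_bigr do rewrite eq_sym.
  by rewrite sum_ind.
rewrite QS -IH /=.
under eq_bigr do rewrite mulr_suml.
rewrite exchange_big /=; apply: eq_bigr => s _.
rewrite /Pop.
under eq_bigr do rewrite -mulrA.
rewrite -mulr_sumr; congr (_ * _).
under eq_bigr do rewrite big_mkcond /= mulr_suml.
rewrite exchange_big /=; apply: eq_bigr => e _.
rewrite (eq_bigr (fun s' => (apply_event e s == s')%:R * (p e * h s'))).
  by rewrite sum_ind.
by move=> s' _; case: eqP => _; rewrite ?mul1r ?mul0r.
Qed.

Definition stepA N := @gen N 'I_N.

Lemma trans (R : realType) N (p : event N -> R) t (h : state N -> R) s0 A :
  Q p (@stepA N) t (fun B => h (compf s0 B)) A = Q p (@apply_event N) t h (compf s0 A).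
Proof.
elim: t A => [|t IH] A //.
rewrite /Q /= /Pop; apply: eq_bigr => e _; congr (_ * _).
rewrite -/(Q p _ t _ _) IH /stepA -gen_comp //.
Qed.

Definition g (R : realType) N (S : {set 'I_N}) (A : {ffun 'I_N -> 'I_N}) : R :=
  (compf (init_state S) A == allM N)%:R.

Lemma fix_eq (R : realType) N (p : event N -> R) S t :
  fixprob_seq p S t = Q p (@stepA N) t (@g R N S) (idm N).
Proof.
have E := trans p t (fun s => (s == allM N)%:R) (init_state S) (idm N).
rewrite compf_id in E; rewrite /g E -distr_op /fixprob_seq.
under eq_bigr do rewrite mulrC eq_sym.
by rewrite sum_ind.
Qed.

Lemma gE (R : realType) N S A : @g R N S A = ([forall j, A j \in S])%:R.
Proof.
rewrite /g; congr (_%:R).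
case: (boolP [forall j, A j \in S]) => [/fintype.forallP H|/fintype.forallP H].
  suff -> : compf (init_state S) A = allM N by rewrite eqxx.
  by apply/ffunP => j; rewrite !ffunE; apply: H.
case: eqP => // E; exfalso; apply: H => j.
by have := congr1 (fun f : state N => f j) E; rewrite !ffunE.
Qed.

Lemma g_mono (R : realType) N S e A : @g R N S A <= g R S (stepA e A).
Proof.
rewrite /g; case Hc: (compf _ A == _); last by rewrite ler0n.
rewrite /stepA -gen_comp (eqP Hc).
suff -> : gen e (allM N) = allM N by rewrite eqxx.
by apply/ffunP => i; rewrite !ffunE; case: ifP; rewrite ?ffunE.
Qed.

Lemma g_le1 (R : realType) N S A : @g R N S A <= 1.
Proof. by rewrite /g; case: (_ == _). Qed.

Lemma g_ge0 (R : realType) N S A : 0 <= @g R N S A.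
Proof. by rewrite /g ler0n. Qed.

Lemma g_const (R : realType) N S (A : {ffun 'I_N -> 'I_N}) (k : 'I_N) : (forall j, A j = k) -> @g R N S A = (k \in S)%:R.
Proof.
move=> Ak; rewrite gE; congr (_%:R); case: fintype.forallP => [H|H].
  by have := H k; rewrite Ak => ->.
case: (boolP (k \in S)) => // Hk; exfalso; apply: H => j; by rewrite Ak.
Qed.

Lemma const_cases N (A : {ffun 'I_N -> 'I_N}) :
  (exists k, forall j, A j = k) \/ (forall (R : realType) i, @g R N [set i] A = 0).
Proof.
case: (boolP [exists k, [forall j, A j == k]]) => [/fintype.existsP[k /fintype.forallP H]|H].
  by left; exists k => j; apply/eqP.
right => R i; rewrite gE; case: fintype.forallP => // H'; exfalso; move/negP: H; apply.
by apply/fintype.existsP; exists i; apply/fintype.forallP => j; have := H' j; rewrite finset.in_set1.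
Qed.

Definition cc (R : realType) N (A : {ffun 'I_N -> 'I_N}) : R :=
  \sum_(i : 'I_N) g R [set i] A.

Lemma cc_const (R : realType) N (A : {ffun 'I_N -> 'I_N}) (k : 'I_N) : (forall j, A j = k) -> @cc R N A = 1.
Proof.
move=> Ak; rewrite /cc.
rewrite (eq_bigr (fun i => (k == i)%:R * 1)); first by rewrite sum_ind.
by move=> i _; rewrite (g_const _ _ Ak) finset.in_set1 eq_sym mulr1.
Qed.

Lemma cc_sumS (R : realType) N (S : {set 'I_N}) (A : {ffun 'I_N -> 'I_N}) (k : 'I_N) : (forall j, A j = k) ->
  \sum_(i in S) @g R N [set i] A = (k \in S)%:R.
Proof.
move=> Ak; rewrite big_mkcond /=.
rewrite (eq_bigr (fun i => (k == i)%:R * (i \in S)%:R)); first by rewrite sum_ind.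
move=> i _; rewrite (g_const _ _ Ak) finset.in_set1.

by case: (i \in S); case: (k == i); rewrite ?mulr1 ?mulr0.
Qed.

Lemma cc_nc (R : realType) N A : (@cc R N A = 1 /\ exists k, forall j, A j = k)
  \/ (@cc R N A = 0 /\ forall i, @g R N [set i] A = 0).
Proof.
case: (const_cases A) => [[k Ak]|H].
  by left; split; [apply: cc_const Ak| exists k].
right; split; last by move=> i; apply: H.
by rewrite /cc big1 // => i _; apply: H.
Qed.

Lemma key_bound (R : realType) N S A :
  `|@g R N S A - \sum_(i in S) g R [set i] A| <= 1 - cc R A.
Proof.
case: (cc_nc R A) => [[-> [k Ak]]|[-> H]].
  by rewrite (cc_sumS _ _ Ak) (g_const _ _ Ak) subrr normr0 subrr.
rewrite big1 // subr0 subr0 ger0_norm ?g_ge0 //; exact: g_le1.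
Qed.

Definition nc (R : realType) N (A : {ffun 'I_N -> 'I_N}) : R := 1 - cc R A.

Lemma cc_ge0 (R : realType) N A : 0 <= @cc R N A.
Proof. by apply: sumr_ge0 => i _; apply: g_ge0. Qed.

Lemma nc_ge0 (R : realType) N A : 0 <= @nc R N A.
Proof. by rewrite /nc; case: (cc_nc R A) => [[-> _]|[-> _]]; rewrite ?subrr ?subr0. Qed.

Lemma nc_le1 (R : realType) N A : @nc R N A <= 1.
Proof. by rewrite /nc lerBlDr lerDl cc_ge0. Qed.

Lemma Q_nc (R : realType) N (p : event N -> R) : \sum_e p e = 1 ->
  forall t x, Q p (@stepA N) t (@nc R N) x = 1 - Q p (@stepA N) t (@cc R N) x.
Proof.
move=> p1 t x; rewrite !Qrep /nc.
under eq_bigr do rewrite mulrBr mulr1.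
by rewrite sumrB K_sum1.
Qed.

Lemma Q_cc (R : realType) N (p : event N -> R) t x :
  Q p (@stepA N) t (@cc R N) x = \sum_i Q p (@stepA N) t (g R [set i]) x.
Proof. exact: (@Q_sum R _ _ _ p (@stepA N) t xpredT (fun i => g R [set i]) x). Qed.

Lemma Pop_g (R : realType) N (p : event N -> R) : replacement_rule p ->
  forall S A, @g R N S A <= Q p (@stepA N) 1 (g R S) A.
Proof.
move=> [p0 p1] S A; rewrite /Q /= /Pop.
rewrite -[X in X <= _]mul1r -p1 mulr_suml; apply: ler_sum => e _.
by apply: ler_wpM2l => //; apply: g_mono.
Qed.

Lemma Pop_nc (R : realType) N (p : event N -> R) : replacement_rule p ->
  forall A, Q p (@stepA N) 1 (@nc R N) A <= nc R A.
Proof.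
move=> [p0 p1] A; rewrite Q_nc // Q_cc /nc lerD2l lerN2 /cc.
by apply: ler_sum => i _; apply: Pop_g.
Qed.

Lemma Q_nc_le (R : realType) N (p : event N -> R) : replacement_rule p ->
  forall t A, Q p (@stepA N) t (@nc R N) A <= nc R A.
Proof.
move=> hp; elim=> [|t IH] A //; rewrite QS.
apply: le_trans (IH A); apply: Q_le; first by case: hp.
by move=> y; apply: Pop_nc.
Qed.

Lemma fix_anc (R : realType) N (p : event N -> R) : fixation_assumption p ->
  exists i es, all (fun e => 0 < p e) es /\
  forall A : {ffun 'I_N -> 'I_N},
    foldl (fun s e => stepA e s) A es = [ffun _ => A i].
Proof.
move=> [i [es [Hall Hs]]]; exists i, es; split => // A.
set B := foldl (fun s e => gen e s) (idm N) es.
have hB : forall j, B j = i.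
  move=> j; have := Hs (init_state [set i]).
  rewrite -{1}(compf_id (init_state [set i])).
  have -> : foldl (fun s e => apply_event e s) (compf (init_state [set i]) (idm N)) es
     = compf (init_state [set i]) B by exact: foldl_comp.
  move/(congr1 (fun f : state N => f j)); rewrite !ffunE !inE eqxx.
  by move/eqP.
rewrite -{1}(compf_id A); rewrite /stepA (foldl_comp es A (idm N)) -/B.
by apply/ffunP => j; rewrite !ffunE hB.
Qed.

Lemma p_le1 (R : realType) N (p : event N -> R) : replacement_rule p -> forall e, p e <= 1.
Proof.
move=> [p0 p1] e; rewrite -p1 (bigD1 e) //= lerDl.
by apply: sumr_ge0 => ? _.
Qed.

Lemma geom_step (R : realType) N (p : event N -> R) (i : 'I_N) es :
  replacement_rule p ->
  (forall A : {ffun 'I_N -> 'I_N}, foldl (fun s e => stepA e s) A es = [ffun _ => A i]) ->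
  forall A, Q p (@stepA N) (size es) (@nc R N) A <= (1 - \prod_(e <- es) p e) * nc R A.
Proof.
move=> hp hf A; have [p0 p1] := hp.
case: (cc_nc R A) => [[c1 _]|[c0 _]].
  apply: le_trans (Q_nc_le hp _ A) _.
  by rewrite /nc c1 subrr mulr0.
have -> : nc R A = 1 by rewrite /nc c0 subr0.
rewrite mulr1 Q_nc // lerD2l lerN2.
have := @Q_fold R _ _ p (@stepA N) p0 (@cc R N) (@cc_ge0 R N) es A.
rewrite hf (@cc_const R N _ (A i)) ?mulr1 // => j; by rewrite ffunE.
Qed.

Lemma geom (R : realType) N (p : event N -> R) (i : 'I_N) es :
  replacement_rule p ->
  (forall A : {ffun 'I_N -> 'I_N}, foldl (fun s e => stepA e s) A es = [ffun _ => A i]) ->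
  all (fun e => 0 < p e) es ->
  forall k, Q p (@stepA N) (k * size es) (@nc R N) (idm N) <= (1 - \prod_(e <- es) p e) ^+ k.
Proof.
move=> hp hf hall; have [p0 p1] := hp.
have r0 : 0 <= 1 - \prod_(e <- es) p e.
  rewrite subr_ge0 big_seq; apply: prodr_ile1 => e He.
  by rewrite p0 p_le1.
elim=> [|k IH]; first by rewrite mul0n expr0 /Q /=; apply: nc_le1.
rewrite mulSnr QD exprS mulrC.
apply: (@le_trans _ _ (Q p (@stepA N) (k * size es)
  (fun y => (1 - \prod_(e <- es) p e) * nc R y + 0) (idm N))).
  apply: Q_le => // y; rewrite addr0; exact: geom_step hp hf y.
rewrite Q_lin Q_const // addr0 [X in _ <= X]mulrC; exact: ler_wpM2l.
Qed.

Lemma Q_sub (R : realType) (E T : finType) (p : E -> R) (f : E -> T -> T) t h1 h2 x :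
  Q p f t (fun y => h1 y - h2 y) x = Q p f t h1 x - Q p f t h2 x.
Proof.
rewrite !Qrep -sumrB; apply: eq_bigr => y _; by rewrite mulrBr.
Qed.

Local Open Scope classical_set_scope.

Lemma cvg_sum_seq (R : realType) (I : eqType) (r : seq I) (P : pred I)
  (u : I -> nat -> R) (l : I -> R) :
  (forall i, u i @ \oo --> l i) ->
  (fun t => \sum_(i <- r | P i) u i t) @ \oo --> \sum_(i <- r | P i) l i.
Proof.
move=> Hu; elim: r => [|i r IH].
  rewrite big_nil; under eq_cvg do rewrite big_nil; exact: cvg_cst.
rewrite big_cons; under eq_cvg do rewrite big_cons.
case: (P i) => //.
exact: (cvgD (Hu i) IH).
Qed.


Unset Implicit Arguments.
Local Open Scope ring_scope.

Theorem mainTheorem6 (R : realType) (N : nat) (p : event N -> R) :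
  replacement_rule p -> fixation_assumption p ->
  exists rho : 'I_N -> R,
    (forall i : 'I_N, fixprob_seq p [set i] @ \oo --> rho i) /\
    (forall S : {set 'I_N}, fixprob_seq p S @ \oo --> \sum_(i in S) rho i) /\
    \sum_(i < N) rho i = 1.
Proof.
move=> hp hfix; have [p0 p1] := hp.
have [i0 [es [hall hf]]] := fix_anc hfix.
have u_nd : forall S, nondecreasing_seq (fixprob_seq p S).
  move=> S; apply/nondecreasing_seqP => n; rewrite !fix_eq QS.
  by apply: Q_le => // y; apply: (Pop_g hp).
have u_cvg : forall S, cvgn (fixprob_seq p S).
  move=> S; apply: nondecreasing_is_cvgn => //; exists 1 => _ [n _ <-].
  rewrite fix_eq -(Q_const (@stepA N) p1 n 1 (idm N)); apply: Q_le => // y.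
  exact: g_le1.
pose rho i := limn (fixprob_seq p [set i]%SET).
pose q t := Q p (@stepA N) t (@nc R N) (idm N).
have q0 : q @ \oo --> 0.
  have q_ni : nonincreasing_seq q.
    apply/nonincreasing_seqP => n; rewrite /q QS.
    by apply: Q_le => // y; apply: (Pop_nc hp).
  have q_ge0 : forall n, 0 <= q n.
    by move=> n; apply: Q_ge0 => // y; apply: nc_ge0.
  have cq : cvgn q.
    by apply: nonincreasing_is_cvgn => //; exists 0 => _ [n _ <-].
  have l_le := nonincreasing_cvgn_ge q_ni cq.
  have l_ge0 : 0 <= limn q.
    have H : \forall n \near \oo, (0:R) <= q n by near=> n; apply: q_ge0.
    exact: (limr_ge cq H).
  set r := 1 - \prod_(e <- es) p e.
  have r0 : 0 <= r.
    rewrite subr_ge0 big_seq; apply: prodr_ile1 => e He.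
    by rewrite p0 p_le1.
  have r1 : r < 1.
    rewrite /r ltrBlDr ltrDl big_seq; apply: prodr_gt0 => e He.
    exact: (allP hall e He).
  have rk : (fun k => r ^+ k) @ \oo --> 0.
    by apply: cvg_expr; rewrite ger0_norm.
  have l_le0 : limn q <= 0.
    have E0 : limn (fun k => r ^+ k) = 0.
      by apply: cvg_lim.
    rewrite -E0; apply: (limr_ge (cvgP _ rk)).
    near=> k; apply: le_trans (l_le (k * size es)%N) _.
    exact: (geom hp hf hall k).
  have -> : 0 = limn q by apply/eqP; rewrite eq_le l_le0 l_ge0.
  exact: cq.
have hS : forall S : {set 'I_N},
    fixprob_seq p S @ \oo --> \sum_(i in S) rho i.
  move=> S.
  pose d t := fixprob_seq p S t - \sum_(i in S) fixprob_seq p [set i]%SET t.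
  have dq : forall t, `|d t| <= q t.
    move=> t; rewrite /d /q fix_eq.
    under eq_bigr do rewrite fix_eq.
    rewrite -(@Q_sum R _ _ _ p (@stepA N) t (fun i => i \in S)) -Q_sub.
    apply: (@le_trans _ _ (Q p (@stepA N) t
      (fun y => `|g R S y - \sum_(i in S) g R [set i]%SET y|) (idm N))).
      exact: Q_norm.
    by apply: Q_le => // y; apply: key_bound.
  have d0 : d @ \oo --> 0.
    apply: (@squeeze_cvgr _ _ _ _ (fun t => - q t) q).
    - by near=> t; rewrite -ler_norml dq.
    - by rewrite -oppr0; apply: cvgN.
    - exact: q0.
  have -> : fixprob_seq p S = (fun t => d t + \sum_(i in S) fixprob_seq p [set i]%SET t).
    by apply: funext => t; rewrite /d subrK.
  rewrite -[X in _ --> X]add0r; apply: cvgD => //.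
  apply: cvg_sum_seq => i; exact: u_cvg.
exists rho; split; first by move=> i; exact: u_cvg.
split => //.
have h1 := hS [set: 'I_N]%SET.
have h2 : fixprob_seq p [set: 'I_N]%SET @ \oo --> (1 : R).
  have -> : fixprob_seq p [set: 'I_N]%SET = fun _ => 1.
    apply: funext => t; rewrite fix_eq.
    rewrite -(Q_const (@stepA N) p1 t 1 (idm N)).
    congr (Q _ _ _ _ _); apply: funext => A; rewrite gE.
    suff -> : [forall j, A j \in [set: 'I_N]%SET] by [].
    by apply/fintype.forallP => j; rewrite inE.
  exact: cvg_cst.
rewrite -(cvg_unique _ h1 h2).
by apply: eq_bigl => i; rewrite inE.
Unshelve. all: by end_near.
Qed.
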